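(* Let $G$ be a finite two-player zero-sum game with finite pure strategy sets $S_1,S_2$ and payoffs $v_1=-v_2$, extended bilinearly to mixed strategies. Run Anytime Double Oracle (ADO) from nonempty initial populations $\Pi^0_1\subseteq S_1$, $\Pi^0_2\subseteq S_2$: at each iteration $t$, for each $i\in\{1,2\}$ let $\pi^r_i$ be player $i$'s Nash equilibrium strategy in the restricted game $G^i$, in which player $i$ may only play mixed strategies supported on $\Pi^t_i$ while player $-i$ may play any mixed strategy in $\Delta(S_{-i})$ (i.e. $\pi^r_i\in\arg\max_{\sigma_i\in\Delta(\Pi^t_i)}\min_{\sigma_{-i}\in\Delta(S_{-i})}v_i(\sigma_i,\sigma_{-i})$); then for each $i$ add to $\Pi^t_i$ a pure best response of player $i$ to $\pi^r_{-i}$, chosen outside $\Pi^t_i$ whenever possible. ADO terminates at an iteration $t$ at which, for neither player $i\in\{1,2\}$, there exists a pure best response to $\pi^r_{-i}$ that is not in $\Pi^t_i$. Then, when ADO terminates, the profile $(\pi^r_1,\pi^r_2)$ is a Nash equilibrium of the full game $G$.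
   Context: $\Delta(X)$ denotes the set of mixed strategies supported on the set $X$ of pure strategies. A best response of player $i$ to $\pi_{-i}$ is a strategy maximizing $v_i(\cdot,\pi_{-i})$ over all strategies of player $i$ in the full game. A Nash equilibrium of $G$ is a profile $(\pi_1,\pi_2)$ such that for each $i$, $v_i(\pi_i,\pi_{-i})=\max_{\pi_i'}v_i(\pi_i',\pi_{-i})$. *)

(* Defs.v *)
From mathcomp Require Import all_boot all_order all_algebra.
Set Implicit Arguments. Unset Strict Implicit. Unset Printing Implicit Defensive.
Import Order.TTheory GRing.Theory Num.Theory.
Local Open Scope ring_scope.

Section Game.
Variables (R : realFieldType) (S1 S2 : finType).

Definition mixed (S : finType) (P : {set S}) (x : {ffun S -> R}) : Prop :=
  [/\ (forall s, 0 <= x s), \sum_s x s = 1 & (forall s, s \notin P -> x s = 0)].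

Definition pure (S : finType) (s : S) : {ffun S -> R} := [ffun t => (t == s)%:R].

Definition v1 (A : S1 -> S2 -> R) (x : {ffun S1 -> R}) (y : {ffun S2 -> R}) : R :=
  \sum_i \sum_j x i * y j * A i j.
Definition v2 (A : S1 -> S2 -> R) (x : {ffun S1 -> R}) (y : {ffun S2 -> R}) : R :=
  - v1 A x y.

Definition restricted_NE (A : S1 -> S2 -> R) (P1 : {set S1}) (P2 : {set S2})
    (x : {ffun S1 -> R}) (y : {ffun S2 -> R}) : Prop :=
  [/\ mixed P1 x, mixed P2 y,
      (forall x', mixed P1 x' -> v1 A x' y <= v1 A x y) &
      (forall y', mixed P2 y' -> v2 A x y' <= v2 A x y)].

Definition nash (A : S1 -> S2 -> R) (x : {ffun S1 -> R}) (y : {ffun S2 -> R}) : Prop :=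
  restricted_NE A [set: S1] [set: S2] x y.

Definition pure_BR1 (A : S1 -> S2 -> R) (y : {ffun S2 -> R}) (s : S1) : Prop :=
  forall x', mixed [set: S1] x' -> v1 A x' y <= v1 A (pure s) y.
Definition pure_BR2 (A : S1 -> S2 -> R) (x : {ffun S1 -> R}) (s : S2) : Prop :=
  forall y', mixed [set: S2] y' -> v2 A x y' <= v2 A x (pure s).

End Game.

(* Main.v *)
Require Import Defs.
From mathcomp Require Import all_boot all_order all_algebra.
Import Order.TTheory GRing.Theory Num.Theory.
Local Open Scope ring_scope.

Section Aux.
Variables (R : realFieldType) (S1 S2 : finType) (A : S1 -> S2 -> R).

Lemma sum_pure (S : finType) (s : S) (F : S -> R) :
  \sum_i (pure R s) i * F i = F s.
Proof.
rewrite (bigD1 s) //= big1 ?addr0; first by rewrite ffunE eqxx mul1r.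
by move=> i /negbTE Hi; rewrite ffunE Hi mul0r.
Qed.

Lemma v1_row x y : v1 A x y = \sum_i x i * (\sum_j y j * A i j).
Proof. by apply: eq_bigr => i _; rewrite mulr_sumr; apply: eq_bigr => j _; rewrite mulrA. Qed.

Lemma v1_col x y : v1 A x y = \sum_j y j * (\sum_i x i * A i j).
Proof.
rewrite /v1 exchange_big; apply: eq_bigr => j _; rewrite mulr_sumr.
by apply: eq_bigr => i _; rewrite mulrA (mulrC (x i)) -mulrA.
Qed.

Lemma v2_pure x t : v2 A x (pure R t) = - \sum_i x i * A i t.
Proof. by rewrite /v2 v1_col sum_pure. Qed.

Lemma v2_col x y : v2 A x y = \sum_j y j * v2 A x (pure R j).
Proof.
rewrite /v2 v1_col -sumrN; apply: eq_bigr => j _.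
by rewrite -/(v2 A x (pure R j)) v2_pure mulrN.
Qed.

Lemma supp (S : finType) (w c : S -> R) : (forall k, 0 <= w k) -> \sum_k w k = 1 ->
  (forall k, c k <= \sum_k w k * c k) -> forall j, w j != 0 -> forall k, c k <= c j.
Proof.
move=> w0 w1 cle j wj k.
move: (cle k) (cle j); set m := \sum_k w k * c k => ck cj.
have mE : m = \sum_k w k * c k by [].
clearbody m.
apply: (le_trans ck).
rewrite leNgt; apply/negP => Hlt.
have : \sum_k0 w k0 * c k0 < \sum_k0 w k0 * m.
  rewrite (bigD1 j) //= [X in _ < X](bigD1 j) //=.
  apply: ltr_leD.
    have wpos : 0 < w j by rewrite lt0r wj w0.
    by rewrite ltr_pM2l.
  by apply: ler_sum => i _; apply: ler_wpM2l => //; rewrite mE cle.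
by rewrite -mulr_suml w1 mul1r -mE ltxx.
Qed.

Lemma pure_mixed (S : finType) (s : S) : mixed [set: S] (pure R s).
Proof.
split.
- by move=> t; rewrite ffunE ler0n.
- rewrite (bigD1 s) //= big1 ?addr0; first by rewrite ffunE eqxx.
  by move=> i /negbTE Hi; rewrite ffunE Hi.
- by move=> t; rewrite in_setT.
Qed.

Lemma mixedT (S : finType) (P : {set S}) (x : {ffun S -> R}) : mixed P x -> mixed [set: S] x.
Proof. by case=> a b _; split => // t; rewrite in_setT. Qed.

End Aux.

Theorem proposition2 (R : realFieldType) (S1 S2 : finType)
  (A : S1 -> S2 -> R) (P1 : {set S1}) (P2 : {set S2})
  (pi1 : {ffun S1 -> R}) (pi2 : {ffun S2 -> R}) :
  P1 != set0 -> P2 != set0 ->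
  (* pi1 is player 1's NE strategy in G^1 (player 1 restricted to P1) *)
  (exists sigma2, restricted_NE A P1 [set: S2] pi1 sigma2) ->
  (* pi2 is player 2's NE strategy in G^2 (player 2 restricted to P2) *)
  (exists sigma1, restricted_NE A [set: S1] P2 sigma1 pi2) ->
  (* termination: no pure best response outside the populations *)
  (forall s, pure_BR1 A pi2 s -> s \in P1) ->
  (forall s, pure_BR2 A pi1 s -> s \in P2) ->
  nash A pi1 pi2.
Proof.
move=> _ _ [s2 [m1 ms2 b1 b2]] [s1 [ms1 m2 c1 c2]] H1 H2.
have ms2P : mixed P2 s2.
  case: ms2 => a b _; split => // j jP.
  apply/eqP; apply/negPn/negP => sj.
  suff : j \in P2 by rewrite (negbTE jP).
  apply: H2.
  have cle : forall k, (fun k => v2 A pi1 (pure R k)) k <= \sum_k s2 k * v2 A pi1 (pure R k).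
    by move=> k; rewrite -v2_col; apply: b2; apply: pure_mixed.
  move=> y [y0 y1 _]; rewrite v2_col.
  have HH := @supp _ _ _ _ a b cle _ sj.
  apply: le_trans (_ : \sum_k y k * v2 A pi1 (pure R j) <= _).
    by apply: ler_sum => k _; apply: ler_wpM2l.
  by rewrite -mulr_suml y1 mul1r.
have ms1P : mixed P1 s1.
  case: ms1 => a b _; split => // j jP.
  apply/eqP; apply/negPn/negP => sj.
  suff : j \in P1 by rewrite (negbTE jP).
  apply: H1.
  have cle : forall k, (fun k => v1 A (pure R k) pi2) k <= \sum_k s1 k * v1 A (pure R k) pi2.
    move=> k /=; have -> : \sum_k s1 k * v1 A (pure R k) pi2 = v1 A s1 pi2.
      by rewrite v1_row; apply: eq_bigr => i _; rewrite v1_row sum_pure.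
    by apply: c1; apply: pure_mixed.
  move=> y [y0 y1 _].
  have -> : v1 A y pi2 = \sum_k y k * v1 A (pure R k) pi2.
    by rewrite v1_row; apply: eq_bigr => i _; rewrite v1_row sum_pure.
  have HH := @supp _ _ _ _ a b cle _ sj.
  apply: le_trans (_ : \sum_k y k * v1 A (pure R j) pi2 <= _).
    by apply: ler_sum => k _; apply: ler_wpM2l.
  by rewrite -mulr_suml y1 mul1r.
have e1 := b1 _ ms1P.
have e2 := c2 _ ms2P; rewrite /v2 lerN2 in e2.
have e3 := b2 _ (@mixedT _ _ _ _ m2); rewrite /v2 lerN2 in e3.
have e4 := c1 _ (@mixedT _ _ _ _ m1).
split.
- exact: (@mixedT _ _ _ _ m1).
- exact: (@mixedT _ _ _ _ m2).
- move=> x' mx'; apply: le_trans (c1 _ mx') _.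
  exact: le_trans e2 (le_trans e1 e3).
- move=> y' my'; apply: le_trans (b2 _ my') _.
  rewrite /v2 lerN2; exact: le_trans e4 (le_trans e2 e1).
Qed.
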